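(* Let $k>l\ge0$ be integers with $k+l\ge3$, $n_0$ an integer with $l\le n_0<k$, $\Delta=k-l$, $f:\mathbb{N}\to[0,\infty)$, and set $\gamma_r=\beta^{lk}_{n_0+r\Delta}$, $\delta_r=f(n_0+r\Delta)$. Let $(d_r)_{r\in\mathbb{N}}$ be a solution, with arbitrary initial values $d_0,d_1\in\mathbb{C}$, of $$d_{r+2}-\frac{1+i\delta_{r+1}}{\gamma_{r+2}}d_{r+1}-\frac{\gamma_{r+1}}{\gamma_{r+2}}d_r=0\qquad(r\in\mathbb{N}).$$ Assume that $\delta_{r+1}/\gamma_{r+2}$ admits an asymptotic expansion in powers of $r^{-1/2}$, $$\frac{\delta_{r+1}}{\gamma_{r+2}}\sim\kappa+\frac{L_1}{r^{1/2}}+\frac{L_2}{r}+\cdots$$ with $\kappa<2$. Then $(d_r)_{r\in\mathbb{N}}\in\ell^2(\mathbb{N};\mathbb{C})$.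
   Context: For integers $x$ and $s\ge0$, $(x,s)=x(x+1)\cdots(x+s-1)$ ($=1$ if $s=0$), with the convention $(x,s)=0$ whenever $x$ is a negative integer; for integers $n$ and $k,l\ge0$, $\beta^{kl}_n=\sqrt{(n-l+1,l)(n-l+1,k)}$ (so $\gamma_r\neq0$ for $r\ge1$). A function $g:\mathbb{N}\to\mathbb{C}$ admits an asymptotic expansion $g(r)\sim\sum_{s\ge0}\lambda_sr^{-s/2}$ if for every $S\in\mathbb{N}$ there are $C,N$ with $|g(r)-\sum_{s=0}^S\lambda_sr^{-s/2}|\le Cr^{-(S+1)/2}$ for all $r\ge N$. *)

(* Defs.v *)
From Stdlib Require Import Reals ZArith.
From Coquelicot Require Import Coquelicot.
Open Scope R_scope.

(* Rising factorial (x,s) = x(x+1)...(x+s-1), (x,0)=1, with the convention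
   (x,s) = 0 whenever x is a negative integer. *)
Fixpoint rise_pos (x : Z) (s : nat) : R :=
  match s with
  | O => 1
  | S s' => rise_pos x s' * IZR (x + Z.of_nat s')
  end.

Definition poch (x : Z) (s : nat) : R :=
  if (x <? 0)%Z then 0 else rise_pos x s.

Definition beta (k l : nat) (n : Z) : R :=
  sqrt (poch (n - Z.of_nat l + 1) l * poch (n - Z.of_nat l + 1) k).

Definition asymp_expansion (g : nat -> R) (lam : nat -> R) : Prop :=
  forall S : nat, exists (Cst : R) (N : nat), forall r : nat, (N <= r)%nat -> (0 < r)%nat ->
    Rabs (g r - sum_f_R0 (fun s => lam s / (sqrt (INR r)) ^ s) S)
      <= Cst / (sqrt (INR r)) ^ (S + 1).

(* Main.v *)
Require Import Defs.
From Stdlib Require Import Reals ZArith Lra Lia Psatz.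
From Coquelicot Require Import Coquelicot.
Open Scope R_scope.

Fixpoint Rr (t : R) (s : nat) : R :=
  match s with O => 1 | S s' => Rr t s' * (t + INR s') end.

Lemma rise_pos_Rr (x : Z) (s : nat) : rise_pos x s = Rr (IZR x) s.
Proof.
  induction s as [|s IH]; simpl; auto.
  rewrite IH, plus_IZR, <- INR_IZR_INZ. reflexivity.
Qed.

Lemma poch_Rr (x : Z) (s : nat) : (0 <= x)%Z -> poch x s = Rr (IZR x) s.
Proof.
  intros H. unfold poch. destruct (Z.ltb_spec x 0); [lia|]. apply rise_pos_Rr.
Qed.

Lemma Rr_pos t s : 0 < t -> 0 < Rr t s.
Proof.
  intros Ht; induction s; simpl; [lra|]. apply Rmult_lt_0_compat; auto.
  pose proof (pos_INR s); lra.
Qed.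

Lemma Rr_ge t s : 0 <= t -> t ^ s <= Rr t s.
Proof.
  intros Ht; induction s; simpl; [lra|].
  pose proof (pos_INR s). rewrite Rmult_comm.
  apply Rmult_le_compat; auto. apply pow_le; auto. lra.
Qed.

Lemma Rr_ratio t D s : 0 < t -> 0 <= D ->
  t ^ s * Rr (t + D) s <= (t + D) ^ s * Rr t s.
Proof.
  intros Ht HD; induction s; simpl; [lra|].
  pose proof (pos_INR s).
  assert (h1 : t * (t + D + INR s) <= (t + D) * (t + INR s)) by nra.
  assert (0 <= t ^ s) by (apply pow_le; lra).
  assert (0 < Rr (t+D) s) by (apply Rr_pos; lra).
  replace (t * t ^ s * (Rr (t + D) s * (t + D + INR s))) with
    ((t ^ s * Rr (t + D) s) * (t * (t + D + INR s))) by ring.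
  replace ((t + D) * (t + D) ^ s * (Rr t s * (t + INR s))) with
    (((t + D) ^ s * Rr t s) * ((t + D) * (t + INR s))) by ring.
  apply Rmult_le_compat; auto.
  - apply Rmult_le_pos; lra.
  - apply Rmult_le_pos; nra.
Qed.

Lemma Rr_lc1 t D s : 0 < t -> 0 <= D ->
  Rr t s * Rr (t + 2 * D) s <= Rr (t + D) s ^ 2.
Proof.
  intros Ht HD; induction s; simpl; [lra|].
  pose proof (pos_INR s).
  assert (0 < Rr t s) by (apply Rr_pos; lra).
  assert (0 < Rr (t+2*D) s) by (apply Rr_pos; lra).
  replace (Rr t s * (t + INR s) * (Rr (t + 2 * D) s * (t + 2 * D + INR s)))
    with ((Rr t s * Rr (t + 2 * D) s) * ((t + INR s) * (t + 2 * D + INR s))) by ring.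
  replace (Rr (t + D) s * (t + D + INR s) * (Rr (t + D) s * (t + D + INR s) * 1))
    with ((Rr (t + D) s ^ 2) * ((t + D + INR s) ^ 2)) by ring.
  apply Rmult_le_compat; auto.
  - apply Rmult_le_pos; lra.
  - apply Rmult_le_pos; lra.
  - nra.
Qed.

Lemma Rr_lc2 t D s : 0 < t -> 0 <= D ->
  Rr (t + D) s ^ 2 <= Rr t s * Rr (t + 2 * D) s * (1 + D ^ 2 / t ^ 2) ^ s.
Proof.
  intros Ht HD; induction s as [|s IHs].
  { simpl; lra. }
  change (Rr (t + D) (S s)) with (Rr (t + D) s * (t + D + INR s)).
  change (Rr t (S s)) with (Rr t s * (t + INR s)).
  change (Rr (t + 2 * D) (S s)) with (Rr (t + 2 * D) s * (t + 2 * D + INR s)).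
  change ((1 + D ^ 2 / t ^ 2) ^ S s) with ((1 + D ^ 2 / t ^ 2) * (1 + D ^ 2 / t ^ 2) ^ s).
  pose proof (pos_INR s).
  assert (0 < Rr t s) by (apply Rr_pos; lra).
  assert (0 < Rr (t+2*D) s) by (apply Rr_pos; lra).
  set (u := D ^ 2 / t ^ 2).
  assert (0 <= u) by (unfold u; apply Rmult_le_pos; [nra| left; apply Rinv_0_lt_compat; nra]).
  set (Q := (t + INR s) * (t + 2 * D + INR s)).
  assert (H4 : t^2 <= Q) by (unfold Q; nra).
  assert (H5 : D^2 <= Q * u).
  { unfold u, Rdiv. rewrite <- Rmult_assoc.
    apply (Rmult_le_reg_r (t^2)); [nra|]. rewrite Rmult_assoc, Rinv_l by nra.
    nra. }
  assert (H6 : (t + D + INR s) ^ 2 <= Q * (1 + u)).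
  { replace ((t + D + INR s) ^ 2) with (Q + D^2) by (unfold Q; ring).
    replace (Q * (1 + u)) with (Q + Q * u) by ring. lra. }
  assert (0 <= (1 + u) ^ s) by (apply pow_le; lra).
  replace ((Rr (t + D) s * (t + D + INR s)) ^ 2) with
    ((Rr (t + D) s ^ 2) * ((t + D + INR s) ^ 2)) by ring.
  replace (Rr t s * (t + INR s) * (Rr (t + 2 * D) s * (t + 2 * D + INR s)) *
      ((1 + u) * (1 + u) ^ s))
    with ((Rr t s * Rr (t + 2 * D) s * (1 + u) ^ s) * (Q * (1 + u))) by (unfold Q; ring).
  apply Rmult_le_compat; auto; apply pow2_ge_0.
Qed.

Lemma pow_bound3 u n : 0 <= u <= 1 -> (1 + u) ^ n <= 1 + 3 ^ n * u.
Proof.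
  intros Hu; induction n; simpl; [lra|].
  assert (1 <= 3 ^ n) by (apply pow_R1_Rle; lra).
  assert (0 <= (1+u)^n) by (apply pow_le; lra).
  assert ((1+u)*(1+u)^n <= (1+u)*(1 + 3^n*u)) by (apply Rmult_le_compat_l; lra).
  assert (3^n*u*u <= 3^n*u) by (assert (0 <= 3^n*u) by nra; nra).
  nra.
Qed.

Lemma bernoulli_lb u n : 0 <= u <= 1 -> 1 - INR n * u <= (1 - u) ^ n.
Proof.
  intros Hu; induction n; [simpl; lra|].
  rewrite S_INR. change ((1 - u) ^ S n) with ((1-u) * (1-u)^n). assert (0 <= INR n) by apply pos_INR.
  assert (0 <= (1-u)^n) by (apply pow_le; lra). nra.
Qed.


Definition PP (k l : nat) t := Rr t k * Rr t l.

Lemma PP_pos k l t : 0 < t -> 0 < PP k l t.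
Proof. intros; unfold PP; apply Rmult_lt_0_compat; apply Rr_pos; auto. Qed.

Lemma PP_ge k l t : 1 <= t -> (3 <= k + l)%nat -> t ^ 3 <= PP k l t.
Proof.
  intros Ht Hkl. unfold PP.
  apply Rle_trans with (t ^ (k + l)).
  - apply Rle_pow; auto.
  - rewrite pow_add. apply Rmult_le_compat; try (apply pow_le; lra); apply Rr_ge; lra.
Qed.

Lemma PP_ratio k l t D : 0 < t -> 0 <= D ->
  t ^ (k + l) * PP k l (t + D) <= (t + D) ^ (k + l) * PP k l t.
Proof.
  intros Ht HD. unfold PP. rewrite !pow_add.
  pose proof (Rr_ratio t D k Ht HD). pose proof (Rr_ratio t D l Ht HD).
  replace (t ^ k * t ^ l * (Rr (t + D) k * Rr (t + D) l)) with
    ((t ^ k * Rr (t + D) k) * (t ^ l * Rr (t + D) l)) by ring.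
  replace ((t + D) ^ k * (t + D) ^ l * (Rr t k * Rr t l)) with
    (((t + D) ^ k * Rr t k) * ((t + D) ^ l * Rr t l)) by ring.
  apply Rmult_le_compat; auto.
  - apply Rmult_le_pos; [apply pow_le; lra| left; apply Rr_pos; lra].
  - apply Rmult_le_pos; [apply pow_le; lra| left; apply Rr_pos; lra].
Qed.

Lemma PP_lc1 k l t D : 0 < t -> 0 <= D ->
  PP k l t * PP k l (t + 2 * D) <= PP k l (t + D) ^ 2.
Proof.
  intros Ht HD. unfold PP.
  pose proof (Rr_lc1 t D k Ht HD). pose proof (Rr_lc1 t D l Ht HD).
  replace (Rr t k * Rr t l * (Rr (t + 2 * D) k * Rr (t + 2 * D) l)) with
    ((Rr t k * Rr (t + 2 * D) k) * (Rr t l * Rr (t + 2 * D) l)) by ring.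
  replace ((Rr (t + D) k * Rr (t + D) l) ^ 2) with
    (Rr (t + D) k ^ 2 * Rr (t + D) l ^ 2) by ring.
  pose proof (Rr_pos t k Ht). pose proof (Rr_pos t l Ht).
  pose proof (Rr_pos (t + 2*D) k ltac:(lra)). pose proof (Rr_pos (t+2*D) l ltac:(lra)).
  apply Rmult_le_compat; auto; apply Rmult_le_pos; lra.
Qed.

Lemma PP_lc2 k l t D : 0 < t -> 0 <= D ->
  PP k l (t + D) ^ 2 <= PP k l t * PP k l (t + 2 * D) * (1 + D ^ 2 / t ^ 2) ^ (k + l).
Proof.
  intros Ht HD. unfold PP.
  pose proof (Rr_lc2 t D k Ht HD). pose proof (Rr_lc2 t D l Ht HD).
  rewrite pow_add.
  replace (Rr t k * Rr t l * (Rr (t + 2 * D) k * Rr (t + 2 * D) l) *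
     ((1 + D ^ 2 / t ^ 2) ^ k * (1 + D ^ 2 / t ^ 2) ^ l)) with
    ((Rr t k * Rr (t + 2 * D) k * (1 + D ^ 2 / t ^ 2) ^ k) *
     (Rr t l * Rr (t + 2 * D) l * (1 + D ^ 2 / t ^ 2) ^ l)) by ring.
  replace ((Rr (t + D) k * Rr (t + D) l) ^ 2) with
    (Rr (t + D) k ^ 2 * Rr (t + D) l ^ 2) by ring.
  apply Rmult_le_compat; auto; apply pow2_ge_0.
Qed.

Lemma G_facts k l D t s : (3 <= k + l)%nat -> 1 <= s -> s ^ 2 <= t -> 1 <= D -> D <= t ->
  let G1 := sqrt (PP k l t) in let G2 := sqrt (PP k l (t + D)) in
  let G3 := sqrt (PP k l (t + 2 * D)) in
  0 < G1 /\ 0 < G2 /\ 0 < G3 /\ 1 <= G1 /\ 1 / G2 <= / s ^ 3 /\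
  0 <= G2 ^ 2 / G3 - G1 <= (3 ^ (k + l) * D ^ 2) * / s ^ 3 * G1 /\
  1 - INR (k + l) * D / s ^ 2 <= (G1 / G2) ^ 2.
Proof.
  intros Hkl Hs Ht HD HDt G1 G2 G3.
  assert (Ht1 : 1 <= t) by nra.
  pose proof (PP_pos k l t ltac:(lra)) as PA.
  pose proof (PP_pos k l (t + D) ltac:(lra)) as PB.
  pose proof (PP_pos k l (t + 2 * D) ltac:(lra)) as PC.
  set (A := PP k l t) in *. set (B := PP k l (t + D)) in *. set (Cc := PP k l (t + 2 * D)) in *.
  assert (g1 : 0 < G1) by (apply sqrt_lt_R0; auto).
  assert (g2 : 0 < G2) by (apply sqrt_lt_R0; auto).
  assert (g3 : 0 < G3) by (apply sqrt_lt_R0; auto).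
  assert (s3 : 0 < s ^ 3) by (apply pow_lt; lra).
  split; [auto|split; [auto|split; [auto|]]].
  split.
  { unfold G1. rewrite <- sqrt_1. apply sqrt_le_1_alt.
    pose proof (PP_ge k l t Ht1 Hkl). assert (1 <= t^3) by (apply pow_R1_Rle; lra). fold A in H. lra. }
  split.
  { assert (Hb : (s^3)^2 <= B).
    { pose proof (PP_ge k l (t + D) ltac:(lra) Hkl). fold B in H.
      assert ((s^3)^2 = (s^2)^3) by ring. rewrite H0.
      assert ((s^2)^3 <= (t+D)^3) by (apply pow_incr; nra). lra. }
    assert (s^3 <= G2).
    { unfold G2. rewrite <- (sqrt_pow2 (s^3)) by lra. apply sqrt_le_1_alt. auto. }
    unfold Rdiv. rewrite Rmult_1_l. apply Rinv_le_contravar; auto. }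
  split.
  {
    assert (u0 : 0 <= D ^ 2 / t ^ 2) by (apply Rmult_le_pos; [nra| left; apply Rinv_0_lt_compat; nra]).
    assert (u1 : D ^ 2 / t ^ 2 <= 1).
    { apply (Rmult_le_reg_r (t^2)); [nra|]. unfold Rdiv. rewrite Rmult_assoc, Rinv_l by nra. nra. }
    set (u := D ^ 2 / t ^ 2) in *.
    pose proof (PP_lc1 k l t D ltac:(lra) ltac:(lra)) as L1. fold A B Cc in L1.
    pose proof (PP_lc2 k l t D ltac:(lra) ltac:(lra)) as L2. fold A B Cc u in L2.
    pose proof (pow_bound3 u (k + l) (conj u0 u1)) as L3.
    set (c := 3 ^ (k + l)) in *.
    assert (c0 : 0 <= c) by (unfold c; apply pow_le; lra).
    assert (L4 : B ^ 2 <= A * Cc * (1 + c * u)).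
    { apply Rle_trans with (1 := L2). apply Rmult_le_compat_l; auto. nra. }
    assert (E13 : G1 * G3 = sqrt (A * Cc)) by (unfold G1, G3; rewrite sqrt_mult; lra).
    assert (EB : G2 ^ 2 = B) by (unfold G2; rewrite pow2_sqrt; lra).
    assert (Lo : G1 * G3 <= B).
    { rewrite E13, <- (sqrt_pow2 B) by lra. apply sqrt_le_1_alt. lra. }
    assert (Hi : B <= G1 * G3 * (1 + c * u)).
    { rewrite E13, <- (sqrt_pow2 B) by lra.
      rewrite <- (sqrt_pow2 (1 + c*u)) by nra. rewrite <- sqrt_mult by nra.
      apply sqrt_le_1_alt. assert (0 <= c*u) by nra.
      assert (A * Cc * (1 + c * u) <= A * Cc * (1 + c * u) ^ 2).
      { apply Rmult_le_compat_l; nra. } lra. }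
    assert (Eq : G2 ^ 2 / G3 - G1 = (B - G1 * G3) / G3) by (rewrite EB; field; lra).
    rewrite Eq. split.
    - apply Rmult_le_pos; [lra| left; apply Rinv_0_lt_compat; lra].
    - assert (Hu : u <= D^2 * / s^3).
      { unfold u. unfold Rdiv. apply Rmult_le_compat_l; [nra|].
        apply Rinv_le_contravar; [auto|].
        assert (s^3 <= s^4) by (change (s^4) with (s * s^3); nra).
        assert (s^4 = (s^2)^2) by ring. assert ((s^2)^2 <= t^2) by (apply pow_incr; nra). lra. }
      apply (Rmult_le_reg_r G3); auto. unfold Rdiv. rewrite Rmult_assoc, Rinv_l by lra.
      rewrite Rmult_1_r.
      assert (G1 * G3 * (c * u) <= G1 * G3 * (c * (D^2 * / s^3))).
      { apply Rmult_le_compat_l; [nra|]. apply Rmult_le_compat_l; auto. }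
      nra. }
  pose proof (PP_ratio k l t D ltac:(lra) ltac:(lra)) as R1. fold A B in R1.
  assert (E : (G1 / G2) ^ 2 = A / B).
  { unfold Rdiv. rewrite Rpow_mult_distr, pow_inv. unfold G1, G2. rewrite !pow2_sqrt; lra. }
  rewrite E.
  assert (Hv : 0 <= D / (t + D) <= 1).
  { split; [apply Rmult_le_pos; [lra| left; apply Rinv_0_lt_compat; lra]|].
    apply (Rmult_le_reg_r (t + D)); [lra|]. unfold Rdiv. rewrite Rmult_assoc, Rinv_l by lra. lra. }
  pose proof (bernoulli_lb (D / (t + D)) (k + l) Hv) as Be.
  assert (Ev : 1 - D / (t + D) = t / (t + D)) by (field; lra).
  rewrite Ev in Be. unfold Rdiv in Be. rewrite Rpow_mult_distr, pow_inv in Be.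
  assert (Hr : t ^ (k + l) * / (t + D) ^ (k + l) <= A / B).
  { assert (0 < (t + D) ^ (k + l)) by (apply pow_lt; lra).
    apply (Rmult_le_reg_r ((t + D) ^ (k + l) * B)). apply Rmult_lt_0_compat; lra.
    replace (t ^ (k + l) * / (t + D) ^ (k + l) * ((t + D) ^ (k + l) * B)) with
      (t ^ (k + l) * B) by (field; lra).
    replace (A / B * ((t + D) ^ (k + l) * B)) with ((t + D) ^ (k + l) * A) by (field; lra).
    auto. }
  assert (Hw : INR (k + l) * D / s ^ 2 >= INR (k + l) * (D * / (t + D))).
  { unfold Rdiv. rewrite Rmult_assoc. apply Rle_ge. apply Rmult_le_compat_l; [apply pos_INR|].
    apply Rmult_le_compat_l; [lra|]. apply Rinv_le_contravar; nra. }
  lra.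
Qed.


Lemma cross_bounds x1 x2 y1 y2 :
  Rabs (x2*y1 - x1*y2) <= ((x1^2+x2^2) + (y1^2+y2^2))/2 /\
  Rabs (x1*y1 + x2*y2) <= ((x1^2+x2^2) + (y1^2+y2^2))/2.
Proof.
  pose proof (pow2_ge_0 (x2 - y1)); pose proof (pow2_ge_0 (x1 + y2));
  pose proof (pow2_ge_0 (x2 + y1)); pose proof (pow2_ge_0 (x1 - y2));
  pose proof (pow2_ge_0 (x1 - y1)); pose proof (pow2_ge_0 (x2 - y2));
  pose proof (pow2_ge_0 (x1 + y1)); pose proof (pow2_ge_0 (x2 + y2)).
  split; apply Rabs_le; split; nra.
Qed.

Lemma Rabs_le_between a b : Rabs a <= b -> -b <= a <= b.
Proof.
  intros H. pose proof (Rle_abs a). pose proof (Rle_abs (-a)).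
  rewrite Rabs_Ropp in H1. lra.
Qed.

Lemma E_lower G1 G2 g mu X Y I :
  0 < G1 -> 0 < G2 -> 0 <= mu < 1 -> 0 <= g <= 2*mu ->
  (1+mu)/2 <= G1/G2 -> 0 <= X -> 0 <= Y -> Rabs I <= (X+Y)/2 ->
  (1-mu)/2 * G1 * (X+Y) <= G1^2/G2 * X + G1*Y + g*G1*I.
Proof.
  intros HG1 HG2 Hmu Hg Hr HX HY HI.
  replace (G1^2/G2) with (G1 * (G1/G2)) by (field; lra).
  set (r := G1/G2) in *.
  assert (Hgi : Rabs (g * I) <= mu * (X+Y)).
  { rewrite Rabs_mult, Rabs_pos_eq by lra. nra. }
  apply Rabs_le_between in Hgi.
  assert (H1 : (1-mu)/2 * (X+Y) <= r*X + Y + g*I) by nra.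
  replace (g*G1*I) with (G1*(g*I)) by ring.
  nra.
Qed.

Lemma E_step G1 G2 G3 g g' mu w c1 c2 X Y I Re E E' :
  0 < G1 -> 0 < G2 -> 0 < G3 -> 0 <= mu < 1 -> 0 <= g <= 2*mu ->
  (1+mu)/2 <= G1/G2 -> 0 <= X -> 0 <= Y -> Rabs I <= (X+Y)/2 -> Rabs Re <= (X+Y)/2 ->
  0 <= w -> 0 <= c1 -> 0 <= c2 ->
  0 <= G2^2/G3 - G1 <= c1 * w * G1 ->
  1/G2 <= w -> 1 <= G1 ->
  Rabs (g - g') <= c2 * w ->
  E = G1^2/G2 * X + G1*Y + g*G1*I ->
  E' - E = Y * (G2^2/G3 - G1 + 1/G2 + g*G2*(g-g')) + (g-g')*G1*I + 2*(G1/G2)*Re ->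
  E' <= E + (c1 + 2 + 5*c2) * w * G1 * (X+Y).
Proof.
  intros HG1 HG2 HG3 Hmu Hg Hr HX HY HI HRe Hw Hc1 Hc2 HD 
    Hinv HG1' Hdg HE HE'.
  assert (HG21 : G2 <= 2*G1).
  { apply (Rmult_le_reg_r (/G2)). apply Rinv_0_lt_compat; lra.
    rewrite Rinv_r by lra. unfold Rdiv in Hr. nra. }
  assert (Hinv' : / G2 <= w) by (unfold Rdiv in Hinv; lra).
  assert (T1 : Y * (1/G2) <= Y * (w * G1)).
  { apply Rmult_le_compat_l; auto. nra. }
  assert (T2 : Rabs (g*G2*(g-g')) <= 2 * (2*G1) * (c2*w)).
  { rewrite !Rabs_mult, (Rabs_pos_eq g), (Rabs_pos_eq G2) by lra.
    apply Rmult_le_compat; try nra. apply Rabs_pos. }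
  apply Rabs_le_between in T2.
  assert (T2' : Y * (g*G2*(g-g')) <= Y * (4*G1*c2*w)).
  { apply Rmult_le_compat_l; auto. lra. }
  assert (T3 : Rabs ((g-g')*G1*I) <= c2*w*G1*((X+Y)/2)).
  { rewrite !Rabs_mult, (Rabs_pos_eq G1) by lra.
    assert (Rabs (g-g')*G1 <= c2*w*G1) by (apply Rmult_le_compat_r; lra).
    pose proof (Rabs_pos (g-g')). pose proof (Rabs_pos I).
    apply Rmult_le_compat; auto. apply Rmult_le_pos; lra. }
  apply Rabs_le_between in T3.
  assert (T4 : Rabs (2*(G1/G2)*Re) <= 2*(G1*w)*((X+Y)/2)).
  { rewrite !Rabs_mult, Rabs_pos_eq by lra. rewrite (Rabs_pos_eq (G1/G2)).
    2: { apply Rmult_le_pos; [lra| left; apply Rinv_0_lt_compat; lra]. }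
    assert (0 <= G1/G2) by (apply Rmult_le_pos; [lra| left; apply Rinv_0_lt_compat; lra]).
    assert (G1/G2 <= G1*w) by (unfold Rdiv; apply Rmult_le_compat_l; lra).
    pose proof (Rabs_pos Re).
    apply Rmult_le_compat; try lra. }
  apply Rabs_le_between in T4.
  assert (T0 : Y * (G2^2/G3 - G1) <= Y * (c1*w*G1)) by (apply Rmult_le_compat_l; lra).
  assert (Hsplit : Y * (G2^2/G3 - G1 + 1/G2 + g*G2*(g-g')) =
     Y * (G2^2/G3 - G1) + Y*(1/G2) + Y*(g*G2*(g-g'))) by ring.
  assert (0 <= w*G1*X) by (apply Rmult_le_pos; nra).
  assert (0 <= c2*w*G1*X) by (apply Rmult_le_pos; nra).
  assert (0 <= c1*w*G1*X) by (apply Rmult_le_pos; nra).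
  nra.
Qed.


Lemma ss_facts s s' : 1 <= s -> s'^2 = s^2 + 1 -> 0 <= s' ->
  (0 <= /s - /s' <= /s^3) /\ (0 <= /s^2 - /s'^2 <= /s^3) /\ (/s'^3 <= /s^3) /\
  (/s^3 <= 6 * (/s - /s')).
Proof.
  intros Hs Hs' Hp.
  assert (Hlt : s < s') by nra.
  assert (Hd : s' - s = / (s' + s)).
  { apply (Rmult_eq_reg_r (s' + s)); [|lra]. rewrite Rinv_l by lra. nra. }
  assert (E1 : /s - /s' = / ((s'+s)*s*s')).
  { replace (/s - /s') with ((s' - s) / (s * s')) by (field; lra).
    rewrite Hd. field. lra. }
  assert (E2 : /s^2 - /s'^2 = / (s^2 * s'^2)).
  { replace (/s^2 - /s'^2) with ((s'^2 - s^2)/(s^2*s'^2)) by (field; lra).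
    rewrite Hs'. field. split; nra. }
  rewrite E1, E2.
  assert (P1 : 0 < (s'+s)*s*s') by (apply Rmult_lt_0_compat; [apply Rmult_lt_0_compat|]; lra).
  assert (P2 : 0 < s^2*s'^2) by (apply Rmult_lt_0_compat; nra).
  assert (P3 : 0 < s^3) by (apply pow_lt; lra).
  split; [split|split; [split|split]].
  - left; apply Rinv_0_lt_compat; auto.
  - apply Rinv_le_contravar; auto. nra.
  - left; apply Rinv_0_lt_compat; auto.
  - apply Rinv_le_contravar; auto. nra.
  - apply Rinv_le_contravar; auto. apply pow_incr; lra.
  - assert (s' <= 2 * s) by nra.
    assert ((s'+s)*s*s' <= 6 * s^3) by nra.
    replace (6 * / ((s' + s) * s * s')) with (/ (((s' + s) * s * s') / 6)) by (field; lra).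
    apply Rinv_le_contravar; lra.
Qed.

Definition sq (r : nat) := sqrt (INR r).

Lemma sq_facts r : (1 <= r)%nat -> 1 <= sq r /\ sq (S r) ^ 2 = sq r ^ 2 + 1 /\ 0 <= sq (S r)
  /\ sq r ^ 2 = INR r.
Proof.
  intros Hr. unfold sq. assert (1 <= INR r) by (apply (le_INR 1); auto).
  rewrite !pow2_sqrt by (try rewrite S_INR; lra). rewrite S_INR.
  split; [|split; [lra|split; [apply sqrt_pos|lra]]].
  rewrite <- sqrt_1. apply sqrt_le_1_alt; lra.
Qed.


Lemma sum2_eq (lam : nat -> R) x : x <> 0 ->
  sum_f_R0 (fun s => lam s / x ^ s) 2 = lam 0%nat + lam 1%nat * / x + lam 2%nat * / x ^ 2.
Proof. intros Hx. simpl. field. auto. Qed.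

Lemma sum0_eq (lam : nat -> R) x : sum_f_R0 (fun s => lam s / x ^ s) 0 = lam 0%nat.
Proof. simpl. field. Qed.

Lemma asym_diff g lam : asymp_expansion g lam -> exists c2 N, 0 <= c2 /\ (1 <= N)%nat /\
  forall r, (N <= r)%nat -> Rabs (g r - g (S r)) <= c2 * / sq r ^ 3.
Proof.
  intros H. destruct (H 2%nat) as [C [N0 HN]].
  exists (Rabs (lam 1%nat) + Rabs (lam 2%nat) + 2 * Rabs C), (Nat.max N0 1).
  split; [pose proof (Rabs_pos (lam 1%nat)); pose proof (Rabs_pos (lam 2%nat));
          pose proof (Rabs_pos C); lra|].
  split; [lia|].
  intros r Hr.
  assert (H1 := HN r ltac:(lia) ltac:(lia)).
  assert (H2 := HN (S r) ltac:(lia) ltac:(lia)).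
  destruct (sq_facts r ltac:(lia)) as [Hs [Hs' [Hp _]]].
  fold (sq r) in H1. fold (sq (S r)) in H2.
  change (2+1)%nat with 3%nat in H1, H2.
  rewrite sum2_eq in H1 by lra. rewrite sum2_eq in H2 by nra.
  destruct (ss_facts _ _ Hs Hs' Hp) as [[A1 A2] [[B1 B2] [C1 C2]]].
  set (s := sq r) in *. set (s' := sq (S r)) in *.
  apply Rabs_le_between in H1. apply Rabs_le_between in H2.
  set (e := g r - (lam 0%nat + lam 1%nat * / s + lam 2%nat * / s ^ 2)) in *.
  set (e' := g (S r) - (lam 0%nat + lam 1%nat * / s' + lam 2%nat * / s' ^ 2)) in *.
  assert (Eq : g r - g (S r) = lam 1%nat * (/s - /s') + lam 2%nat * (/s^2 - /s'^2) + e - e')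
    by (unfold e, e'; ring).
  rewrite Eq.
  assert (P3 : 0 < / s^3) by (apply Rinv_0_lt_compat, pow_lt; lra).
  assert (T1 : Rabs (lam 1%nat * (/s - /s')) <= Rabs (lam 1%nat) * / s^3).
  { rewrite Rabs_mult, (Rabs_pos_eq (/s - /s')) by lra.
    apply Rmult_le_compat_l; [apply Rabs_pos|lra]. }
  assert (T2 : Rabs (lam 2%nat * (/s^2 - /s'^2)) <= Rabs (lam 2%nat) * / s^3).
  { rewrite Rabs_mult, (Rabs_pos_eq (/s^2 - /s'^2)) by lra.
    apply Rmult_le_compat_l; [apply Rabs_pos|lra]. }
  assert (T3 : Rabs e <= Rabs C * / s^3).
  { apply Rabs_le. unfold Rdiv in H1.
    pose proof (Rle_abs C). pose proof (Rle_abs (-C)). rewrite Rabs_Ropp in *. nra. }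
  assert (T4 : Rabs e' <= Rabs C * / s^3).
  { apply Rabs_le. unfold Rdiv in H2.
    assert (0 < / s'^3) by (apply Rinv_0_lt_compat, pow_lt; nra).
    pose proof (Rle_abs C). pose proof (Rle_abs (-C)). rewrite Rabs_Ropp in *.
    pose proof (Rabs_pos C).
    assert (Rabs C * / s'^3 <= Rabs C * / s^3) by (apply Rmult_le_compat_l; lra).
    nra. }
  apply Rabs_le_between in T1. apply Rabs_le_between in T2.
  apply Rabs_le_between in T3. apply Rabs_le_between in T4.
  apply Rabs_le. lra.
Qed.

Lemma asym_le g lam B : asymp_expansion g lam -> lam 0%nat < B ->
  exists N, (1 <= N)%nat /\ forall r, (N <= r)%nat -> g r <= B.
Proof.
  intros H HB. destruct (H 0%nat) as [C [N0 HN]].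
  destruct (INR_unbounded ((Rabs C / (B - lam 0%nat))^2)) as [N1 HN1].
  exists (Nat.max (Nat.max N0 N1) 1). split; [lia|].
  intros r Hr.
  assert (H1 := HN r ltac:(lia) ltac:(lia)).
  rewrite sum0_eq in H1. fold (sq r) in H1. change (0+1)%nat with 1%nat in H1.
  destruct (sq_facts r ltac:(lia)) as [Hs [_ [_ Hr2]]].
  assert (HN1r : INR N1 <= INR r) by (apply le_INR; lia).
  set (s := sq r) in *.
  assert (Hq : Rabs C / (B - lam 0%nat) < s).
  { apply Rsqr_incrst_0; unfold Rsqr.
    - replace (s*s) with (s^2) by ring. 
      replace (Rabs C / (B - lam 0%nat) * (Rabs C / (B - lam 0%nat))) with
        ((Rabs C / (B - lam 0%nat))^2) by ring. lra.
    - apply Rmult_le_pos; [apply Rabs_pos| left; apply Rinv_0_lt_compat; lra].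
    - lra. }
  assert (Hq' : Rabs C < s * (B - lam 0%nat)).
  { apply (Rmult_lt_compat_r (B - lam 0%nat)) in Hq; [|lra].
    unfold Rdiv in Hq. rewrite Rmult_assoc, Rinv_l in Hq by lra. lra. }
  apply Rabs_le_between in H1.
  assert (Hc : C / s ^ 1 <= B - lam 0%nat).
  { rewrite pow_1. apply (Rmult_le_reg_r s); [lra|]. unfold Rdiv.
    rewrite Rmult_assoc, Rinv_l by lra. pose proof (Rle_abs C). nra. }
  lra.
Qed.


Lemma rec_components (a b c : C) (G1 G2 al : R) : G2 <> 0 ->
  (c - (RtoC 1 + Ci * RtoC al) / RtoC G2 * b - RtoC G1 / RtoC G2 * a)%C = RtoC 0 ->
  fst c = (G1 * fst a + fst b - al * snd b) / G2 /\
  snd c = (G1 * snd a + snd b + al * fst b) / G2.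
Proof.
  intros HG H. destruct a as [a1 a2], b as [b1 b2], c as [c1 c2].
  unfold Cminus, Cplus, Copp, Cmult, Cdiv, Cinv, RtoC, Ci in H; simpl in H.
  injection H as H1 H2. simpl.
  split.
  - match type of H1 with ?c + - ?P + - ?Q = 0 => assert (Hc : c = P + Q) by lra end.
    rewrite Hc. field. auto.
  - match type of H2 with ?c + - ?P + - ?Q = 0 => assert (Hc : c = P + Q) by lra end.
    rewrite Hc. field. auto.
Qed.

Definition Efun (G1 G2 g x1 x2 y1 y2 : R) :=
  G1^2/G2 * (x1^2+x2^2) + G1*(y1^2+y2^2) + g*G1*(x2*y1 - x1*y2).

Lemma E_identity G1 G2 G3 g g' x1 x2 y1 y2 z1 z2 :
  G2 <> 0 -> G3 <> 0 ->
  z1 = (G1 * x1 + y1 - (g*G2) * y2) / G2 ->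
  z2 = (G1 * x2 + y2 + (g*G2) * y1) / G2 ->
  Efun G2 G3 g' y1 y2 z1 z2 - Efun G1 G2 g x1 x2 y1 y2 =
  (y1^2+y2^2) * (G2^2/G3 - G1 + 1/G2 + g*G2*(g-g')) + (g-g')*G1*(x2*y1 - x1*y2)
  + 2*(G1/G2)*(x1*y1+x2*y2).
Proof.
  intros H2 H3 -> ->. unfold Efun. field. auto.
Qed.


Lemma exp_le' a b : a <= b -> exp a <= exp b.
Proof. intros [H|H]; [left; apply exp_increasing; auto| subst; lra]. Qed.

Lemma gam_eq (k l n0 r : nat) : (l < k)%nat -> (l <= n0)%nat -> (1 <= r)%nat ->
  beta l k (Z.of_nat (n0 + r * (k - l))) =
  sqrt (PP k l (INR n0 + INR r * INR (k - l) - INR k + 1)).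
Proof.
  intros Hlk Hn0 Hr. unfold beta, PP.
  assert (Hk : (k <= n0 + r * (k - l))%nat) by nia.
  rewrite !poch_Rr by lia.
  replace (IZR (Z.of_nat (n0 + r * (k - l)) - Z.of_nat k + 1))
    with (INR n0 + INR r * INR (k - l) - INR k + 1); [reflexivity|].
  rewrite plus_IZR, minus_IZR, <- !INR_IZR_INZ, plus_INR, mult_INR. reflexivity.
Qed.

Lemma tt_ge (k l n0 r : nat) : (l < k)%nat -> (l <= n0)%nat -> (1 <= r)%nat ->
  INR r <= INR n0 + INR r * INR (k - l) - INR k + 1.
Proof.
  intros Hlk Hn0 Hr. rewrite minus_INR by lia.
  assert (1 <= INR r) by (apply (le_INR 1); auto).
  assert (INR l <= INR n0) by (apply le_INR; auto).
  assert (INR l + 1 <= INR k) by (rewrite <- S_INR; apply le_INR; lia).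
  assert (0 <= (INR r - 1) * (INR k - INR l - 1)) by (apply Rmult_le_pos; lra).
  nra.
Qed.

Lemma Cmod2 (z : C) : Cmod z ^ 2 = fst z ^ 2 + snd z ^ 2.
Proof. unfold Cmod. rewrite pow2_sqrt; [reflexivity|]. nra. Qed.

Lemma ex_series_bound (a : nat -> R) (N : nat) (K : R) (tau : nat -> R) :
  0 <= K -> (forall n, 0 <= a n) -> (forall n, 0 <= tau n) ->
  (forall n, (N <= n)%nat -> a (S n) <= K * (tau (S n) - tau (S (S n)))) ->
  ex_series a.
Proof.
  intros HK0 Ha Ht Hb.
  assert (Hinc : forall n, sum_n a n <= sum_n a (S n)).
  { intros n. rewrite sum_Sn. unfold plus; simpl. pose proof (Ha (S n)); lra. }
  assert (Hmono : forall n m, (n <= m)%nat -> sum_n a n <= sum_n a m).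
  { intros n m Hnm. induction Hnm; [lra|]. pose proof (Hinc m). lra. }
  assert (Htel : forall m, sum_n a (N + m) <= sum_n a N + K * (tau (S N) - tau (S (N + m)))).
  { induction m.
    - rewrite Nat.add_0_r. lra.
    - rewrite Nat.add_succ_r, sum_Sn. unfold plus; simpl.
      pose proof (Hb (N + m)%nat ltac:(lia)). lra. }
  assert (HK : forall m, sum_n a (N + m) <= sum_n a N + K * tau (S N)).
  { intros m. pose proof (Htel m). pose proof (Ht (S N)). pose proof (Ht (S (N + m))).
    assert (0 <= K * tau (S (N + m))) by (apply Rmult_le_pos; auto).
    lra. }
  destruct (ex_finite_lim_seq_incr (sum_n a) (sum_n a N + K * tau (S N)) Hinc) as [l Hl].
  { intros n. destruct (Nat.le_gt_cases N n).
    - replace n with (N + (n - N))%nat by lia. apply HK.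
    - pose proof (Hmono n N ltac:(lia)). pose proof (Ht (S N)).
      assert (0 <= K * tau (S N)) by (apply Rmult_le_pos; auto). lra. }
  exists l. exact Hl.
Qed.

Lemma gronwall (E w tau : nat -> R) (N : nat) (Cc : R) :
  0 <= Cc -> (forall r, (N <= r)%nat -> 0 <= E r) ->
  (forall r, (N <= r)%nat -> E (S r) <= E r + Cc * w r * E r) ->
  (forall r, (N <= r)%nat -> w r <= 6 * (tau r - tau (S r))) ->
  (forall r, 0 <= tau r) ->
  forall r, (N <= r)%nat -> E r <= E N * exp (6 * Cc * tau N).
Proof.
  intros HC HE Hs Hw Ht.
  assert (Cl : forall m, E (N + m)%nat * exp (6 * Cc * tau (N + m)%nat) <= E N * exp (6 * Cc * tau N)).
  { induction m.
    - rewrite Nat.add_0_r. lra.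
    - rewrite Nat.add_succ_r. set (x := (N + m)%nat) in *.
      assert (Hx : (N <= x)%nat) by (unfold x; lia).
      pose proof (Hs x Hx). pose proof (Hw x Hx). pose proof (HE x Hx). pose proof (HE (S x) ltac:(lia)).
      pose proof (exp_pos (6 * Cc * tau (S x))).
      assert (E (S x) * exp (6 * Cc * tau (S x)) <= E x * (1 + Cc * w x) * exp (6 * Cc * tau (S x))).
      { apply Rmult_le_compat_r; lra. }
      assert (1 + Cc * w x <= exp (Cc * w x)) by apply exp_ineq1_le.
      assert (E x * (1 + Cc * w x) <= E x * exp (Cc * w x)) by (apply Rmult_le_compat_l; lra).
      assert (exp (Cc * w x) * exp (6 * Cc * tau (S x)) <= exp (6 * Cc * tau x)).
      { rewrite <- exp_plus. apply exp_le'. nra. }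
      assert (E x * exp (Cc * w x) * exp (6 * Cc * tau (S x)) <= E x * exp (6 * Cc * tau x)).
      { rewrite Rmult_assoc. apply Rmult_le_compat_l; lra. }
      assert (E x * (1 + Cc * w x) * exp (6 * Cc * tau (S x)) <= E x * exp (Cc * w x) * exp (6 * Cc * tau (S x))).
      { apply Rmult_le_compat_r; lra. }
      lra. }
  intros r Hr. replace r with (N + (r - N))%nat by lia.
  pose proof (Cl (r - N)%nat).
  assert (1 <= exp (6 * Cc * tau (N + (r - N))%nat)).
  { rewrite <- exp_0. apply exp_le'. pose proof (Ht (N + (r - N))%nat). nra. }
  pose proof (HE (N + (r - N))%nat ltac:(lia)).
  nra.
Qed.


Theorem lemma4p14 (k l n0 : nat) (f : nat -> R) (d : nat -> C)
  (Hlk : (l < k)%nat) (Hkl3 : (3 <= k + l)%nat)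
  (Hn0l : (l <= n0)%nat) (Hn0k : (n0 < k)%nat)
  (Hf : forall n, 0 <= f n)
  (Hrec : forall r : nat,
     let Delta := (k - l)%nat in
     let gamma := fun r : nat => beta l k (Z.of_nat (n0 + r * Delta)) in
     let delta := fun r : nat => f (n0 + r * Delta)%nat in
     (d (r + 2)%nat
      - (RtoC 1 + Ci * RtoC (delta (r + 1)%nat)) / RtoC (gamma (r + 2)%nat) * d (r + 1)%nat
      - RtoC (gamma (r + 1)%nat) / RtoC (gamma (r + 2)%nat) * d r)%C = RtoC 0)
  (lam : nat -> R)
  (Hasym : asymp_expansion
     (fun r => f (n0 + (r + 1) * (k - l))%nat
               / beta l k (Z.of_nat (n0 + (r + 2) * (k - l)))) lam)
  (Hkappa : lam 0%nat < 2) :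
  ex_series (fun r => (Cmod (d r)) ^ 2).
Proof.
  set (Dl := (k - l)%nat).
  set (D := INR Dl).
  assert (HD1 : 1 <= D) by (unfold D, Dl; apply (le_INR 1); lia).
  set (gam := fun r : nat => beta l k (Z.of_nat (n0 + r * Dl))).
  set (tt := fun r : nat => INR n0 + INR r * D - INR k + 1).
  assert (Hgam : forall r, (1 <= r)%nat -> gam r = sqrt (PP k l (tt r)))
    by (intros; apply gam_eq; auto).
  assert (Htt : forall r, tt (S r) = tt r + D) by (intros; unfold tt; rewrite S_INR; ring).
  assert (Httge : forall r, (1 <= r)%nat -> INR r <= tt r) by (intros; apply tt_ge; auto).
  assert (Hgpos : forall r, (1 <= r)%nat -> 0 < gam r).
  { intros r Hr. rewrite Hgam by auto. apply sqrt_lt_R0, PP_pos.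
    pose proof (Httge r Hr). assert (1 <= INR r) by (apply (le_INR 1); auto). lra. }
  set (g := fun r => f (n0 + (r + 1) * (k - l))%nat
               / beta l k (Z.of_nat (n0 + (r + 2) * (k - l)))) in Hasym.
  assert (Hg : forall r, g r = f (n0 + S r * Dl)%nat / gam (S (S r))).
  { intros r. unfold g, gam, Dl. replace (r + 2)%nat with (S (S r)) by lia.
    replace (r + 1)%nat with (S r) by lia. reflexivity. }
  assert (Hg0 : forall r, 0 <= g r).
  { intros r. rewrite Hg. apply Rmult_le_pos; auto. left; apply Rinv_0_lt_compat, Hgpos; lia. }
  assert (Hrc : forall r,
    fst (d (S (S r))) = (gam (S r) * fst (d r) + fst (d (S r)) - (g r * gam (S (S r))) * snd (d (S r))) / gam (S (S r)) /\
    snd (d (S (S r))) = (gam (S r) * snd (d r) + snd (d (S r)) + (g r * gam (S (S r))) * fst (d (S r))) / gam (S (S r))).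
  { intros r. specialize (Hrec r). cbv beta zeta in Hrec.
    replace (r + 2)%nat with (S (S r)) in Hrec by lia.
    replace (r + 1)%nat with (S r) in Hrec by lia.
    assert (E : g r * gam (S (S r)) = f (n0 + S r * Dl)%nat).
    { rewrite Hg. field. apply Rgt_not_eq, Hgpos; lia. }
    rewrite E. apply rec_components; auto. apply Rgt_not_eq, Hgpos; lia. }
  set (X := fun r => fst (d r) ^ 2 + snd (d r) ^ 2).
  set (En := fun r => Efun (gam (S r)) (gam (S (S r))) (g r) (fst (d r)) (snd (d r))
                        (fst (d (S r))) (snd (d (S r)))).
  set (mu := (Rmax (lam 0%nat) 0 + 2) / 4).
  assert (Hmu : 1/2 <= mu < 1).
  { unfold mu. pose proof (Rmax_r (lam 0%nat) 0).
    destruct (Rle_dec (lam 0%nat) 0); [rewrite Rmax_right by lra | rewrite Rmax_left by lra]; lra. }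
  assert (Hlm : lam 0%nat < 2 * mu).
  { unfold mu. pose proof (Rmax_l (lam 0%nat) 0).
    destruct (Rle_dec (lam 0%nat) 0); [rewrite Rmax_right by lra | rewrite Rmax_left by lra]; lra. }
  destruct (asym_le g lam (2 * mu) Hasym Hlm) as [Ng [Ng1 HNg]].
  destruct (asym_diff g lam Hasym) as [c2 [N2 [Hc2 [HN21 HN2]]]].
  set (th := ((1 + mu) / 2) ^ 2).
  assert (Hth : th < 1) by (unfold th; nra).
  destruct (INR_unbounded (INR (k + l) * D / (1 - th))) as [Nr HNr].
  set (N := Nat.max (Nat.max Ng N2) (Nat.max Nr (Nat.max Dl 1))).
  set (c0 := (1 - mu) / 2).
  set (c1 := 3 ^ (k + l) * D ^ 2).
  assert (Hc1 : 0 <= c1) by (unfold c1; apply Rmult_le_pos; [apply pow_le; lra| nra]).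
  set (Cc := (c1 + 2 + 5 * c2) / c0).
  set (w := fun r => / sq r ^ 3).
  assert (Hkey : forall r, (N <= r)%nat ->
    0 <= En r /\ En (S r) <= En r + Cc * w r * En r /\ X r <= (2 / c0) * w r * En r).
  { intros r Hr.
    assert (Hr1 : (1 <= r)%nat) by lia.
    destruct (sq_facts r Hr1) as [Hs [Hs' [Hsp Hsr]]].
    set (t := tt (S r)).
    assert (Ht1 : tt (S (S r)) = t + D) by (apply Htt).
    assert (Ht2 : tt (S (S (S r))) = t + 2 * D) by (rewrite Htt, Ht1; ring).
    assert (HtS : INR (S r) <= t) by (apply Httge; lia).
    rewrite S_INR in HtS.
    assert (Hs2t : sq r ^ 2 <= t) by lra.
    assert (HDt : D <= t).
    { assert (INR Dl <= INR r) by (apply le_INR; lia). unfold D. lra. }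
    pose proof (G_facts k l D t (sq r) Hkl3 Hs Hs2t HD1 HDt) as GF. cbv zeta in GF.
    replace (sqrt (PP k l t)) with (gam (S r)) in GF by (rewrite Hgam by lia; reflexivity).
    replace (sqrt (PP k l (t + D))) with (gam (S (S r))) in GF by (rewrite Hgam by lia; rewrite Ht1; reflexivity).
    replace (sqrt (PP k l (t + 2 * D))) with (gam (S (S (S r)))) in GF by (rewrite Hgam by lia; rewrite Ht2; reflexivity).
    destruct GF as [g1 [g2 [g3 [g1' [ginv [gD grho]]]]]].
    destruct (Hrc r) as [Hz1 Hz2].
    pose proof (HNg r ltac:(lia)) as Hgle.
    pose proof (Hg0 r) as Hgge.
    pose proof (HN2 r ltac:(lia)) as Hdg.
    destruct (cross_bounds (fst (d r)) (snd (d r)) (fst (d (S r))) (snd (d (S r)))) as [CB1 CB2].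
    assert (HEid := E_identity (gam (S r)) (gam (S (S r))) (gam (S (S (S r)))) (g r) (g (S r))
      (fst (d r)) (snd (d r)) (fst (d (S r))) (snd (d (S r))) (fst (d (S (S r)))) (snd (d (S (S r))))
      ltac:(lra) ltac:(lra) Hz1 Hz2).
    set (G1 := gam (S r)) in *. set (G2 := gam (S (S r))) in *. set (G3 := gam (S (S (S r)))) in *.
    assert (Hrho : (1 + mu) / 2 <= G1 / G2).
    { assert (HKD : INR (k + l) * D / sq r ^ 2 <= 1 - th).
      { assert (HNrr : INR Nr <= INR r) by (apply le_INR; lia).
        assert (1 <= INR r) by (apply (le_INR 1); lia).
        rewrite Hsr. apply (Rmult_le_reg_r (INR r)); [lra|].
        unfold Rdiv. rewrite Rmult_assoc, Rinv_l by lra. rewrite Rmult_1_r.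
        assert (Hlt : INR (k + l) * D * / (1 - th) < INR r) by lra.
        apply (Rmult_lt_compat_r (1 - th)) in Hlt; [|lra].
        rewrite Rmult_assoc, Rinv_l in Hlt by lra. lra. }
      assert (Hth2 : th <= (G1 / G2) ^ 2) by lra.
      unfold th in Hth2.
      assert (0 <= G1 / G2) by (apply Rmult_le_pos; [lra| left; apply Rinv_0_lt_compat; lra]).
      nra. }
    assert (HE : En r = G1 ^ 2 / G2 * X r + G1 * X (S r) +
       g r * G1 * (snd (d r) * fst (d (S r)) - fst (d r) * snd (d (S r)))) by reflexivity.
    assert (HE' : En (S r) = Efun G2 G3 (g (S r)) (fst (d (S r))) (snd (d (S r)))
        (fst (d (S (S r)))) (snd (d (S (S r))))) by reflexivity.
    assert (Hw0 : 0 <= w r) by (unfold w; left; apply Rinv_0_lt_compat, pow_lt; lra).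
    assert (HX0 : 0 <= X r) by (unfold X; nra).
    assert (HY0 : 0 <= X (S r)) by (unfold X; nra).
    pose proof (E_lower G1 G2 (g r) mu (X r) (X (S r)) _ g1 g2 ltac:(lra) ltac:(lra) Hrho HX0 HY0 CB1) as Hlow.
    pose proof (E_step G1 G2 G3 (g r) (g (S r)) mu (w r) c1 c2 (X r) (X (S r)) _ _ (En r) (En (S r))
      g1 g2 g3 ltac:(lra) ltac:(lra) Hrho HX0 HY0 CB1 CB2 Hw0 Hc1 Hc2 gD ginv g1' Hdg HE
      ltac:(rewrite HE'; unfold Efun in HEid |- *; exact HEid)) as Hstep.
    assert (L : c0 * G1 * (X r + X (S r)) <= En r) by (unfold c0; exact Hlow).
    assert (Hc0' : 0 < c0) by (unfold c0; lra).
    assert (P0 : 0 <= c0 * G1 * (X r + X (S r))) by (apply Rmult_le_pos; [apply Rmult_le_pos|]; lra).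
    split; [lra|split].
    - assert (Eq : (c1 + 2 + 5 * c2) * w r * G1 * (X r + X (S r)) =
                   Cc * w r * (c0 * G1 * (X r + X (S r)))) by (unfold Cc; field; lra).
      assert (HCc' : 0 <= Cc * w r).
      { unfold Cc. apply Rmult_le_pos; auto. apply Rmult_le_pos; [lra| left; apply Rinv_0_lt_compat; lra]. }
      assert (Cc * w r * (c0 * G1 * (X r + X (S r))) <= Cc * w r * En r) by (apply Rmult_le_compat_l; auto).
      lra.
    - assert (HG21 : 1 <= w r * G2).
      { change (/ sq r ^ 3) with (w r) in ginv. unfold Rdiv in ginv. rewrite Rmult_1_l in ginv.
        apply (Rmult_le_compat_r G2) in ginv; [|lra]. rewrite Rinv_l in ginv by lra. lra. }
      assert (HG12 : G2 * (3/4) <= G1).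
      { assert (Hq : 3/4 <= G1 / G2) by lra. apply (Rmult_le_compat_r G2) in Hq; [|lra].
        replace (G1 / G2 * G2) with G1 in Hq by (field; lra). lra. }
      assert (H1w : 1 <= 2 * w r * G1) by nra.
      assert (2 / c0 * w r * (c0 * G1 * (X r + X (S r))) <= 2 / c0 * w r * En r).
      { apply Rmult_le_compat_l; auto. apply Rmult_le_pos; auto.
        apply Rmult_le_pos; [lra| left; apply Rinv_0_lt_compat; lra]. }
      assert (Eq : 2 / c0 * w r * (c0 * G1 * (X r + X (S r))) = (2 * w r * G1) * (X r + X (S r)))
        by (field; lra).
      nra. }
  assert (Hc0 : 0 < c0) by (unfold c0; lra).
  assert (HCc : 0 <= Cc) by (unfold Cc; apply Rmult_le_pos; [lra| left; apply Rinv_0_lt_compat; lra]).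
  set (tau := fun r => / sq r).
  assert (Htau : forall r, 0 <= tau r).
  { intros r. unfold tau, sq. destruct (Req_dec (sqrt (INR r)) 0) as [e|ne].
    - rewrite e, Rinv_0; lra.
    - left; apply Rinv_0_lt_compat. pose proof (sqrt_pos (INR r)); lra. }
  assert (Hwt : forall r, (N <= r)%nat -> w r <= 6 * (tau r - tau (S r))).
  { intros r Hr. destruct (sq_facts r ltac:(lia)) as [A1 [A2 [A3 _]]].
    destruct (ss_facts _ _ A1 A2 A3) as [_ [_ [_ B]]]. exact B. }
  assert (HM : forall r, (N <= r)%nat -> En r <= En N * exp (6 * Cc * tau N)).
  { apply gronwall with (w := w); auto.
    - intros r Hr; apply (Hkey r Hr).
    - intros r Hr; apply (Hkey r Hr). }
  set (M := En N * exp (6 * Cc * tau N)) in *.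
  assert (HM0 : 0 <= M).
  { unfold M. apply Rmult_le_pos; [apply (Hkey N); lia| left; apply exp_pos]. }
  apply (ex_series_bound _ N (12 * M / c0) tau).
  - apply Rmult_le_pos; [lra| left; apply Rinv_0_lt_compat; lra].
  - intros n. apply pow2_ge_0.
  - exact Htau.
  - intros n Hn. rewrite Cmod2. change (fst (d (S n)) ^ 2 + snd (d (S n)) ^ 2) with (X (S n)).
    destruct (Hkey (S n) ltac:(lia)) as [_ [_ H3]].
    pose proof (Hwt (S n) ltac:(lia)).
    assert (0 <= w (S n)) by (unfold w; left; apply Rinv_0_lt_compat, pow_lt;
      destruct (sq_facts (S n) ltac:(lia)) as [A1 _]; lra).
    pose proof (HM (S n) ltac:(lia)).
    assert (2 / c0 * w (S n) * En (S n) <= 2 / c0 * w (S n) * M).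
    { apply Rmult_le_compat_l; auto. apply Rmult_le_pos; auto.
      apply Rmult_le_pos; [lra| left; apply Rinv_0_lt_compat; lra]. }
    assert (2 / c0 * w (S n) * M <= 2 / c0 * (6 * (tau (S n) - tau (S (S n)))) * M).
    { apply Rmult_le_compat_r; auto. apply Rmult_le_compat_l; auto.
      apply Rmult_le_pos; [lra| left; apply Rinv_0_lt_compat; lra]. }
    replace (12 * M / c0 * (tau (S n) - tau (S (S n)))) with
      (2 / c0 * (6 * (tau (S n) - tau (S (S n)))) * M) by (field; lra).
    lra.
Qed.
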